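(* Let $\gamma\ge6/5$ and consider the SIEMS4 coefficients $(a_0,\dots,a_3)=\big(\gamma^3+\tfrac{3\gamma^2}{2}-\tfrac{\gamma}{2}+\tfrac1{12},\ -3\gamma^3-\tfrac{3\gamma^2}{2}+3\gamma-\tfrac5{12},\ 3\gamma^3-\tfrac{3\gamma^2}{2}-\tfrac{3\gamma}{2}+\tfrac{13}{12},\ -\gamma^3+\tfrac{3\gamma^2}{2}-\gamma+\tfrac14\big)$, $(b_0,\dots,b_4)=(\gamma^3,\ 3\gamma^2-3\gamma^3,\ 3\gamma^3-6\gamma^2+3\gamma,\ -\gamma^3+3\gamma^2-3\gamma+1,\ 0)$, $(c_0,\dots,c_3)=(\gamma^3+3\gamma^2,\ -3\gamma^3-6\gamma^2+3\gamma,\ 3\gamma^3+3\gamma^2-3\gamma+1,\ -\gamma^3)$. Then $$\sigma_{\mathrm{F}}=1,\quad\sigma_{\mathrm{E}}=\frac{3(8\gamma^3+12\gamma^2-6\gamma+1)}{4(6\gamma^3-3\gamma+1)},\quad\lambda_{\mathrm{I}}=\frac{3(2\gamma-1)^3}{4(6\gamma^3-3\gamma+1)},$$ so that $\mathfrak{I}_{\mathrm{IE}}=\dfrac{(2\gamma-1)^3}{8\gamma^3+12\gamma^2-6\gamma+1}$.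
   Context: For coefficient vectors $(a_j)_{j=0}^{\mathrm{k}-1}$, $(b_j)_{j=0}^{\mathrm{k}}$, $(c_j)_{j=0}^{\mathrm{k}-1}$ define $a(\theta)=\sum_j a_je^{\imath j\theta}$, $b(\theta)=\sum_j b_je^{\imath j\theta}$, $c(\theta)=\sum_jc_je^{\imath j\theta}$ and $\sigma_{\mathrm{F}}=\max_{\theta\in[0,2\pi)}|1/a(\theta)|$, $\sigma_{\mathrm{E}}=\max_{\theta\in[0,2\pi)}|c(\theta)/a(\theta)|$, $\lambda_{\mathrm{I}}=\min_{\theta\in[0,2\pi)}\Re[b(\theta)/a(\theta)]$, $\mathfrak{I}_{\mathrm{IE}}=\lambda_{\mathrm{I}}/\sigma_{\mathrm{E}}$. Here $\mathrm{k}=4$. *)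

(* Defs.v *)
From Stdlib Require Import Reals List.
From Coquelicot Require Import Coquelicot.
Import ListNotations.
Open Scope R_scope.

Definition eit (t : R) : C := (cos t, sin t).

Fixpoint trig_aux (cs : list R) (j : nat) (θ : R) : C :=
  match cs with
  | nil => RtoC 0
  | c :: cs' => Cplus (Cmult (RtoC c) (eit (INR j * θ))) (trig_aux cs' (S j) θ)
  end.

Definition trig (cs : list R) (θ : R) : C := trig_aux cs 0 θ.

Definition in_period (t : R) : Prop := 0 <= t < 2 * PI.

Definition is_max_on_period (f : R -> R) (v : R) : Prop :=
  (exists t, in_period t /\ f t = v) /\ (forall t, in_period t -> f t <= v).

Definition is_min_on_period (f : R -> R) (v : R) : Prop :=
  (exists t, in_period t /\ f t = v) /\ (forall t, in_period t -> v <= f t).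

Definition a_nonvanishing (a : list R) : Prop :=
  forall t, in_period t -> trig a t <> RtoC 0.

Definition sigmaF_is (a : list R) (v : R) : Prop :=
  a_nonvanishing a /\ is_max_on_period (fun t => Cmod (Cinv (trig a t))) v.

Definition sigmaE_is (a c : list R) (v : R) : Prop :=
  a_nonvanishing a /\ is_max_on_period (fun t => Cmod (Cdiv (trig c t) (trig a t))) v.

Definition lambdaI_is (a b : list R) (v : R) : Prop :=
  a_nonvanishing a /\ is_min_on_period (fun t => Re (Cdiv (trig b t) (trig a t))) v.

Definition siems4_a (g : R) : list R :=
  [ g^3 + 3*g^2/2 - g/2 + 1/12;
    -3*g^3 - 3*g^2/2 + 3*g - 5/12;
    3*g^3 - 3*g^2/2 - 3*g/2 + 13/12;
    -g^3 + 3*g^2/2 - g + 1/4 ].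

Definition siems4_b (g : R) : list R :=
  [ g^3; 3*g^2 - 3*g^3; 3*g^3 - 6*g^2 + 3*g; -g^3 + 3*g^2 - 3*g + 1; 0 ].

Definition siems4_c (g : R) : list R :=
  [ g^3 + 3*g^2; -3*g^3 - 6*g^2 + 3*g; 3*g^3 + 3*g^2 - 3*g + 1; -g^3 ].

(* Main.v *)
Require Import Defs.
From Stdlib Require Import Reals List Lra Psatz.
From Coquelicot Require Import Coquelicot.
Import ListNotations.
Open Scope R_scope.

Definition PA (g c : R) : R := (13/9) + (-5/9)*c^1 + (-1/18)*c^2 + (1/6)*c^3 + (-22/3)*g^1 + (7)*g^1*c^1 + (2)*g^1*c^2 + (-5/3)*g^1*c^3 + (15)*g^2 + (-16)*g^2*c^1 + (-7)*g^2*c^2 + (8)*g^2*c^3 + (-34/3)*g^3 + (6)*g^3*c^1 + (22)*g^3*c^2 + (-50/3)*g^3*c^3 + (-2)*g^4 + (18)*g^4*c^1 + (-30)*g^4*c^2 + (14)*g^4*c^3 + (8)*g^6 + (-24)*g^6*c^1 + (24)*g^6*c^2 + (-8)*g^6*c^3.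
Definition PB (g c : R) : R := (2/3) + (5/6)*c^1 + (-5/6)*c^2 + (1/3)*c^3 + (-3)*g^1 + (-3)*g^1*c^1 + (9)*g^1*c^2 + (-3)*g^1*c^3 + (6)*g^2 + (7)*g^2*c^1 + (-26)*g^2*c^2 + (13)*g^2*c^3 + (-20/3)*g^3 + (-6)*g^3*c^1 + (32)*g^3*c^2 + (-58/3)*g^3*c^3 + (8)*g^4 + (-12)*g^4*c^1 + (4)*g^4*c^3 + (-12)*g^5 + (36)*g^5*c^1 + (-36)*g^5*c^2 + (12)*g^5*c^3 + (8)*g^6 + (-24)*g^6*c^1 + (24)*g^6*c^2 + (-8)*g^6*c^3.
Definition PC (g c : R) : R := (1) + (-6)*g^1 + (6)*g^1*c^1 + (18)*g^2 + (-30)*g^2*c^1 + (12)*g^2*c^2 + (-32)*g^3 + (64)*g^3*c^1 + (-32)*g^3*c^2 + (12)*g^4 + (-24)*g^4*c^1 + (12)*g^4*c^2 + (24)*g^5 + (-72)*g^5*c^1 + (72)*g^5*c^2 + (-24)*g^5*c^3 + (8)*g^6 + (-24)*g^6*c^1 + (24)*g^6*c^2 + (-8)*g^6*c^3.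
Definition c10 (h : R) : R := ((821367/62500) + h*((741844/9375) + h*((23914/125) + h*((18056/75) + h*((824/5) + h*((288/5) + h*(8))))))).
Definition c11 (h : R) : R := ((0) + h*((1023/250) + h*((647/50) + h*((74/5) + h*(6))))).
Definition c12 (h : R) : R := ((5833/22500) + h*((21/10) + h*(3/2))).
Definition cE0 (h : R) : R := ((3616066157/625000) + h*((5083385574/78125) + h*((4774256787/15625) + h*((2512882842/3125) + h*((825897774/625) + h*((1413744) + h*((24662144/25) + h*((2162592/5) + h*((107712) + h*(11520)))))))))).
Definition cE1 (h : R) : R := ((1133013303/312500) + h*((796163943/31250) + h*((475225689/6250) + h*((15556404/125) + h*((3002814/25) + h*((1699272/25) + h*((103584/5) + h*(2592)))))))).
Definition cE2 (h : R) : R := ((14426293/25000) + h*((125097/50) + h*((213291/50) + h*((17736/5) + h*((1422) + h*(216)))))).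
Definition cI0 (h : R) : R := ((952469/75000) + h*((404087/2500) + h*((3512/5) + h*((22339/15) + h*((1692) + h*((996) + h*(240))))))).
Definition cI1 (h : R) : R := ((113623/7500) + h*((10516/125) + h*((8673/50) + h*((791/5) + h*(54))))).
Definition cI2 (h : R) : R := ((571/200) + h*((141/20) + h*(9/2))).

Lemma cos2' t : cos (2 * t) = 2 * cos t ^ 2 - 1.
Proof. rewrite cos_2a_cos. ring. Qed.
Lemma sin2' t : sin (2 * t) = 2 * sin t * cos t.
Proof. rewrite sin_2a. ring. Qed.
Lemma cos3' t : cos (3 * t) = 4 * cos t ^ 3 - 3 * cos t.
Proof.
  replace (3 * t) with (2 * t + t) by ring.
  rewrite cos_plus, cos2', sin2'.
  pose proof (sin2_cos2 t) as H. unfold Rsqr in H.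
  replace (2 * sin t * cos t * sin t) with (2 * cos t * (sin t * sin t)) by ring.
  replace (sin t * sin t) with (1 - cos t * cos t) by lra. ring.
Qed.
Lemma sin3' t : sin (3 * t) = sin t * (4 * cos t ^ 2 - 1).
Proof.
  replace (3 * t) with (2 * t + t) by ring.
  rewrite sin_plus, cos2', sin2'. ring.
Qed.

Definition R4 x0 x1 x2 x3 c := x0 + x1 * c + x2 * (2 * c ^ 2 - 1) + x3 * (4 * c ^ 3 - 3 * c).
Definition I4 x1 x2 x3 c := x1 + x2 * (2 * c) + x3 * (4 * c ^ 2 - 1).

Lemma trig4 x0 x1 x2 x3 t :
  trig [x0; x1; x2; x3] t = (R4 x0 x1 x2 x3 (cos t), sin t * I4 x1 x2 x3 (cos t)).
Proof.
  unfold trig, trig_aux, eit, R4, I4.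
  replace (INR 0 * t) with 0 by (simpl; ring).
  replace (INR 1 * t) with t by (simpl; ring).
  replace (INR 2 * t) with (2 * t) by (simpl; ring).
  replace (INR 3 * t) with (3 * t) by (simpl; ring).
  rewrite cos2', sin2', cos3', sin3', cos_0, sin_0.
  unfold Cplus, Cmult, RtoC; simpl. f_equal; ring.
Qed.

Lemma trig5 x0 x1 x2 x3 t :
  trig [x0; x1; x2; x3; 0] t = (R4 x0 x1 x2 x3 (cos t), sin t * I4 x1 x2 x3 (cos t)).
Proof.
  rewrite <- trig4. unfold trig, trig_aux, eit, RtoC, Cplus, Cmult; simpl. f_equal; ring.
Qed.

Lemma sq_sub t x y : x^2 + (sin t * y)^2 = x^2 + (1 - cos t^2)*y^2.
Proof. pose proof (sin2_cos2 t) as H. unfold Rsqr in H.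
  replace ((sin t * y)^2) with ((sin t * sin t) * y^2) by ring.
  replace (sin t * sin t) with (1 - cos t^2) by lra. ring. Qed.
Lemma prod_sub t x1 y1 x2 y2 : x1*x2 + (sin t*y1)*(sin t*y2) = x1*x2 + (1-cos t^2)*y1*y2.
Proof. pose proof (sin2_cos2 t) as H. unfold Rsqr in H.
  replace ((sin t*y1)*(sin t*y2)) with ((sin t * sin t) * y1*y2) by ring.
  replace (sin t * sin t) with (1 - cos t^2) by lra. ring. Qed.

Lemma normA g t : fst (trig (siems4_a g) t) ^ 2 + snd (trig (siems4_a g) t) ^ 2 = PA g (cos t).
Proof. unfold siems4_a. rewrite trig4. simpl fst; simpl snd. rewrite sq_sub.
  unfold R4, I4, PA. field. Qed.
Lemma normC g t : fst (trig (siems4_c g) t) ^ 2 + snd (trig (siems4_c g) t) ^ 2 = PC g (cos t).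
Proof. unfold siems4_c. rewrite trig4. simpl fst; simpl snd. rewrite sq_sub.
  unfold R4, I4, PC. field. Qed.
Lemma dotBA g t : fst (trig (siems4_b g) t) * fst (trig (siems4_a g) t)
   + snd (trig (siems4_b g) t) * snd (trig (siems4_a g) t) = PB g (cos t).
Proof. unfold siems4_a, siems4_b. rewrite trig4, trig5. simpl fst; simpl snd. rewrite prod_sub.
  unfold R4, I4, PB. field. Qed.

Definition Dg g := 6*g^3 - 3*g + 1.
Definition Ng g := 8*g^3 + 12*g^2 - 6*g + 1.
Definition Kg g := (2*g - 1)^3.

Lemma cert1 h c : PA (h+6/5) c - 1 =
  (1-c)*(c10 h*(1-c)^2 + c11 h*(1-c^2) + c12 h*(1+c)^2 + (6409/11250)*c^2).
Proof. unfold PA, c10, c11, c12. field. Qed.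
Lemma certE h c : 9*Ng (h+6/5)^2 * PA (h+6/5) c - 16 * Dg (h+6/5)^2 * PC (h+6/5) c =
  (1+c)*(cE0 h*(1-c)^2 + cE1 h*(1-c^2) + cE2 h*(1+c)^2).
Proof. unfold PA, PC, Ng, Dg, cE0, cE1, cE2. field. Qed.
Lemma certI h c : 4*Dg (h+6/5) * PB (h+6/5) c - 3 * Kg (h+6/5) * PA (h+6/5) c =
  (1+c)*(cI0 h*(1-c)^2 + cI1 h*(1-c^2) + cI2 h*(1+c)^2).
Proof. unfold PA, PB, Kg, Dg, cI0, cI1, cI2. field. Qed.

Ltac posc := repeat (first [lra | apply Rplus_le_le_0_compat | apply Rmult_le_pos]).

Lemma quad_nonneg a b d c : 0 <= a -> 0 <= b -> 0 <= d -> -1 <= c <= 1 ->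
  0 <= a*(1-c)^2 + b*(1-c^2) + d*(1+c)^2.
Proof. intros. assert (0 <= 1 - c^2) by nra.
  apply Rplus_le_le_0_compat; [apply Rplus_le_le_0_compat|]; apply Rmult_le_pos; try nra. Qed.

Lemma pos1 g c : 6/5 <= g -> -1 <= c <= 1 -> 1 <= PA g c.
Proof. intros Hg Hc.
  assert (E : g = (g - 6/5) + 6/5) by ring.
  assert (Hh : 0 <= g - 6/5) by lra.
  set (h := g - 6/5) in *. rewrite E.
  assert (H := cert1 h c).
  assert (0 <= c10 h) by (unfold c10; posc).
  assert (0 <= c11 h) by (unfold c11; posc).
  assert (0 <= c12 h) by (unfold c12; posc).
  assert (0 <= c10 h*(1-c)^2 + c11 h*(1-c^2) + c12 h*(1+c)^2) by (apply quad_nonneg; auto).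
  assert (0 <= (6409/11250)*c^2) by nra.
  nra. Qed.

Lemma posE g c : 6/5 <= g -> -1 <= c <= 1 -> 0 <= 9*Ng g^2 * PA g c - 16 * Dg g^2 * PC g c.
Proof. intros Hg Hc.
  assert (E : g = (g - 6/5) + 6/5) by ring.
  assert (Hh : 0 <= g - 6/5) by lra.
  set (h := g - 6/5) in *. rewrite E, certE.
  assert (0 <= cE0 h) by (unfold cE0; posc).
  assert (0 <= cE1 h) by (unfold cE1; posc).
  assert (0 <= cE2 h) by (unfold cE2; posc).
  assert (0 <= cE0 h*(1-c)^2 + cE1 h*(1-c^2) + cE2 h*(1+c)^2) by (apply quad_nonneg; auto).
  nra. Qed.

Lemma posI g c : 6/5 <= g -> -1 <= c <= 1 -> 0 <= 4*Dg g * PB g c - 3 * Kg g * PA g c.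
Proof. intros Hg Hc.
  assert (E : g = (g - 6/5) + 6/5) by ring.
  assert (Hh : 0 <= g - 6/5) by lra.
  set (h := g - 6/5) in *. rewrite E, certI.
  assert (0 <= cI0 h) by (unfold cI0; posc).
  assert (0 <= cI1 h) by (unfold cI1; posc).
  assert (0 <= cI2 h) by (unfold cI2; posc).
  assert (0 <= cI0 h*(1-c)^2 + cI1 h*(1-c^2) + cI2 h*(1+c)^2) by (apply quad_nonneg; auto).
  nra. Qed.

Lemma Dg_pos g : 6/5 <= g -> 0 < Dg g.
Proof. intros. unfold Dg. assert (E : g = (g - 6/5) + 6/5) by ring.
  assert (Hh : 0 <= g - 6/5) by lra. set (h := g - 6/5) in *. rewrite E.
  replace (6 * (h + 6 / 5) ^ 3 - 3 * (h + 6 / 5) + 1) with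
    (971/125 + h*(573/25 + h*(108/5 + h*6))) by field.
  assert (0 <= h*(573/25 + h*(108/5 + h*6))) by posc. lra. Qed.
Lemma Ng_pos g : 6/5 <= g -> 0 < Ng g.
Proof. intros. unfold Ng. assert (0 <= g^2) by nra. assert (0 <= g^3) by (simpl; nra). nra. Qed.
Lemma Kg_pos g : 6/5 <= g -> 0 < Kg g.
Proof. intros. unfold Kg. apply pow_lt. lra. Qed.

Lemma Re_div u v : fst v ^ 2 + snd v ^ 2 <> 0 ->
  Re (Cdiv u v) = (fst u * fst v + snd u * snd v) / (fst v ^ 2 + snd v ^ 2).
Proof. destruct u as [u1 u2], v as [v1 v2]. simpl. intros H.
  unfold Cdiv, Cinv, Cmult, Re. simpl. field. contradict H. ring_simplify. ring_simplify in H. exact H. Qed.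

Lemma cos_bounds t : -1 <= cos t <= 1.
Proof. apply COS_bound. Qed.

Lemma a_nz g t : 6/5 <= g -> trig (siems4_a g) t <> RtoC 0.
Proof. intros Hg H. assert (H1 := normA g t). rewrite H in H1. simpl in H1.
  assert (H2 := pos1 g (cos t) Hg (cos_bounds t)). lra. Qed.

Lemma PA_pos g t : 6/5 <= g -> 0 < PA g (cos t).
Proof. intros Hg. assert (H2 := pos1 g (cos t) Hg (cos_bounds t)). lra. Qed.

Lemma PA_m1 g : PA g (-1) = (4/3 * Dg g)^2.
Proof. unfold PA, Dg. field. Qed.
Lemma PC_m1 g : PC g (-1) = (Ng g)^2.
Proof. unfold PC, Ng. field. Qed.
Lemma PB_m1 g : PB g (-1) = Kg g * (4/3 * Dg g).
Proof. unfold PB, Kg, Dg. field. Qed.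
Lemma PA_1 g : PA g 1 = 1.
Proof. unfold PA. field. Qed.

Lemma in_period_0 : in_period 0.
Proof. unfold in_period. pose proof PI_RGT_0. lra. Qed.
Lemma in_period_PI : in_period PI.
Proof. unfold in_period. pose proof PI_RGT_0. lra. Qed.

Theorem mainTheorem11 (g : R) (hg : 6/5 <= g) :
  let sE := 3 * (8*g^3 + 12*g^2 - 6*g + 1) / (4 * (6*g^3 - 3*g + 1)) in
  let lI := 3 * (2*g - 1)^3 / (4 * (6*g^3 - 3*g + 1)) in
  sigmaF_is (siems4_a g) 1 /\
  sigmaE_is (siems4_a g) (siems4_c g) sE /\
  lambdaI_is (siems4_a g) (siems4_b g) lI /\
  lI / sE = (2*g - 1)^3 / (8*g^3 + 12*g^2 - 6*g + 1).
Proof.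
  intros sE lI.
  assert (HD := Dg_pos g hg). assert (HN := Ng_pos g hg). assert (HK := Kg_pos g hg).
  assert (HsE : sE = 3 * Ng g / (4 * Dg g)) by reflexivity.
  assert (HlI : lI = 3 * Kg g / (4 * Dg g)) by reflexivity.
  assert (Hnz : a_nonvanishing (siems4_a g)) by (intros t _; apply a_nz; exact hg).
  assert (HCA : forall t, Cmod (trig (siems4_a g) t) = sqrt (PA g (cos t))).
  { intros t. unfold Cmod. rewrite normA. reflexivity. }
  assert (HCC : forall t, Cmod (trig (siems4_c g) t) = sqrt (PC g (cos t))).
  { intros t. unfold Cmod. rewrite normC. reflexivity. }
  split; [|split; [|split]].
  - split; [exact Hnz|]. split.
    + exists 0. split; [apply in_period_0|].
      rewrite Cmod_inv by (apply a_nz; exact hg).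
      rewrite HCA, cos_0, PA_1, sqrt_1. apply Rinv_1.
    + intros t _. rewrite Cmod_inv by (apply a_nz; exact hg). rewrite HCA.
      assert (H1 := pos1 g (cos t) hg (cos_bounds t)).
      assert (1 <= sqrt (PA g (cos t))) by (rewrite <- sqrt_1; apply sqrt_le_1_alt; lra).
      rewrite <- Rinv_1. apply Rinv_le_contravar; lra.
  - split; [exact Hnz|]. split.
    + exists PI. split; [apply in_period_PI|].
      rewrite Cmod_div by (apply a_nz; exact hg).
      rewrite HCA, HCC, cos_PI, PA_m1, PC_m1, !sqrt_pow2 by lra.
      rewrite HsE. field. lra.
    + intros t _. rewrite Cmod_div by (apply a_nz; exact hg).
      rewrite HCA, HCC.
      assert (HP := PA_pos g t hg).
      assert (H1 := posE g (cos t) hg (cos_bounds t)).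
      rewrite <- sqrt_div_alt by exact HP.
      assert (0 <= sE) by (rewrite HsE; apply Rlt_le, Rdiv_lt_0_compat; lra).
      rewrite <- (sqrt_pow2 sE) by assumption. apply sqrt_le_1_alt.
      assert (Eq : sE^2 - PC g (cos t) / PA g (cos t) =
        (9*Ng g^2 * PA g (cos t) - 16 * Dg g^2 * PC g (cos t)) / (16 * Dg g^2 * PA g (cos t))).
      { rewrite HsE. field. lra. }
      assert (0 <= (9*Ng g^2 * PA g (cos t) - 16 * Dg g^2 * PC g (cos t)) / (16 * Dg g^2 * PA g (cos t))).
      { apply Rdiv_le_0_compat; [lra|]. assert (0 < Dg g ^2) by (apply pow_lt; lra). nra. }
      lra.
  - split; [exact Hnz|]. split.
    + exists PI. split; [apply in_period_PI|].
      rewrite Re_div. 2:{ rewrite normA. pose proof (PA_pos g PI hg). lra. }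
      rewrite dotBA, normA, cos_PI, PA_m1, PB_m1, HlI. field. lra.
    + intros t _.
      rewrite Re_div. 2:{ rewrite normA. pose proof (PA_pos g t hg). lra. }
      rewrite dotBA, normA.
      assert (HP := PA_pos g t hg).
      assert (H1 := posI g (cos t) hg (cos_bounds t)).
      assert (Eq : PB g (cos t) / PA g (cos t) - lI =
        (4*Dg g * PB g (cos t) - 3 * Kg g * PA g (cos t)) / (4 * Dg g * PA g (cos t))).
      { rewrite HlI. field. lra. }
      assert (0 <= (4*Dg g * PB g (cos t) - 3 * Kg g * PA g (cos t)) / (4 * Dg g * PA g (cos t))).
      { apply Rdiv_le_0_compat; [lra|]. nra. }
      lra.
  - rewrite HsE, HlI. unfold Kg, Ng in *. field. split; lra.
Qed.
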